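(* Let $n,m$ be positive integers, $S\subseteq S_n$ a subset containing the identity, and $G\le S_n$ the subgroup generated by $S$. If the player can win the $(S,m)$-game, then $|G|=1$, or $m=1$, or $(|G|,m)=(p^a,p^b)$ for some prime $p$ and positive integers $a,b$. Equivalently, if there are distinct primes $p,q$ with $p\mid |G|$ and $q\mid m$, the player cannot win.
   Context: The $(S,m)$-game: $n$ counters at positions $1,\dots,n$, each showing an element of $\mathbb{Z}_m$, so a configuration is a vector in $\mathbb{Z}_m^n$, initially arbitrary and unknown. Each turn the player chooses a move $y\in\mathbb{Z}_m^n$, added coordinatewise; then an adversarially chosen permutation $\sigma\in S$ (possibly different each turn) is applied, replacing $x$ by $x'$ with $x'_{\sigma(i)}=x_i$. The player wins if at some moment (including initially) all counters show $0$. A strategy is a finite sequence of moves; it is winning if it forces the zero configuration at some time for every initial configuration and every choice of permutations. ''The player can win'' means a winning finite sequence exists. *)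

(* Defs.v *)
From mathcomp Require Import all_boot all_fingroup.
Set Implicit Arguments. Unset Strict Implicit. Unset Printing Implicit Defensive.

(* The (S,m)-game.  Elements of Z_m are represented by natural numbers,
   read modulo m; a configuration is a function 'I_n -> nat (read mod m). *)

Definition config (n : nat) := 'I_n -> nat.

(* One turn: add the move y coordinatewise, then apply sigma:
   x'_(sigma i) = x_i + y_i, i.e. x' j = (x + y) (sigma^-1 j). *)
Definition step (n : nat) (x y : config n) (s : 'S_n) : config n :=
  fun j => x ((s^-1)%g j) + y ((s^-1)%g j).

Fixpoint config_at (n : nat) (x : config n) (ys : seq (config n))
    (ss : nat -> 'S_n) (t : nat) : config n :=
  match t with
  | 0 => x
  | t'.+1 => step (config_at x ys ss t') (nth (fun _ => 0) ys t') (ss t')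
  end.

Definition is_zero_mod (n m : nat) (x : config n) : Prop :=
  forall i, x i %% m = 0.

Definition winning (n m : nat) (S : {set 'S_n}) (ys : seq (config n)) : Prop :=
  forall (x : config n) (ss : nat -> 'S_n),
    (forall t, ss t \in S) ->
    exists2 t, t <= size ys & is_zero_mod m (config_at x ys ss t).

Definition can_win (n m : nat) (S : {set 'S_n}) : Prop :=
  exists ys : seq (config n), winning m S ys.

(* Main.v *)
Require Import Defs.
From mathcomp Require Import all_boot all_fingroup all_algebra all_solvable.
From Stdlib Require Import Classical.
Set Implicit Arguments. Unset Strict Implicit. Unset Printing Implicit Defensive.
Import GRing.Theory.

Section Alg.
Local Open Scope ring_scope.

Definition act (n q : nat) (s : 'S_n) (v : 'rV['F_q]_n) : 'rV['F_q]_n :=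
  \row_j v 0 ((s^-1)%g j).

Lemma actD n q s (u w : 'rV['F_q]_n) : act s (u + w) = act s u + act s w.
Proof. by apply/rowP=> j; rewrite !mxE. Qed.
Lemma actN n q s (u : 'rV['F_q]_n) : act s (- u) = - act s u.
Proof. by apply/rowP=> j; rewrite !mxE. Qed.
Lemma act0 n q s : act s (0 : 'rV['F_q]_n) = 0.
Proof. by apply/rowP=> j; rewrite !mxE. Qed.
Lemma actB n q s (u w : 'rV['F_q]_n) : act s (u - w) = act s u - act s w.
Proof. by rewrite actD actN. Qed.
Lemma act1 n q (u : 'rV['F_q]_n) : act 1%g u = u.
Proof. by apply/rowP=> j; rewrite !mxE invg1 perm1. Qed.
Lemma actM n q s t (u : 'rV['F_q]_n) : act (s * t)%g u = act t (act s u).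
Proof. by apply/rowP=> j; rewrite !mxE invMg permM. Qed.

Fixpoint Vj n q (S : {set 'S_n}) (j : nat) (v : 'rV['F_q]_n) : Prop :=
  match j with
  | 0 => v = 0
  | j'.+1 => forall s, s \in S -> Vj S j' (act s v - v)
  end.

Lemma Vj0 n q (S : {set 'S_n}) j : Vj S j (0 : 'rV['F_q]_n).
Proof. elim: j => [//|j IH] s _ /=; by rewrite act0 subrr. Qed.

Lemma VjD n q (S : {set 'S_n}) j (u w : 'rV['F_q]_n) :
  Vj S j u -> Vj S j w -> Vj S j (u + w).
Proof.
elim: j u w => [|j IH] u w /=; first by move=> -> ->; rewrite addr0.
move=> Hu Hw s sS.
have -> : act s (u + w) - (u + w) = (act s u - u) + (act s w - w)
  by rewrite actD opprD addrACA.
by apply: IH; [apply: Hu | apply: Hw].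
Qed.

Lemma VjN n q (S : {set 'S_n}) j (u : 'rV['F_q]_n) :
  Vj S j u -> Vj S j (- u).
Proof.
elim: j u => [|j IH] u /=; first by move=> ->; rewrite oppr0.
move=> Hu s sS.
have -> : act s (- u) - (- u) = - (act s u - u) by rewrite actN opprB opprK addrC.
by apply: IH; apply: Hu.
Qed.

Lemma VjB n q (S : {set 'S_n}) j (u w : 'rV['F_q]_n) :
  Vj S j u -> Vj S j w -> Vj S j (u - w).
Proof. by move=> Hu Hw; apply: VjD => //; apply: VjN. Qed.

Lemma Vj_mono n q (S : {set 'S_n}) j (v : 'rV['F_q]_n) :
  Vj S j v -> Vj S j.+1 v.
Proof.
elim: j v => [|j IH] v /=; first by move=> -> s _; rewrite act0 subrr.
by move=> H s sS; apply: IH; apply: H.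
Qed.

Lemma Vj_monoL n q (S : {set 'S_n}) j k (v : 'rV['F_q]_n) :
  (j <= k)%N -> Vj S j v -> Vj S k v.
Proof.
move=> /subnKC <-; elim: (k - j)%N => [|d IH]; first by rewrite addn0.
by move=> H; rewrite addnS; apply: Vj_mono; apply: IH.
Qed.

Lemma Vj_actS n q (S : {set 'S_n}) j (v : 'rV['F_q]_n) s :
  s \in S -> Vj S j v -> Vj S j (act s v).
Proof.
elim: j v s => [|j IH] v s sS /=; first by move=> ->; rewrite act0.
move=> H t tS.
have -> : act t (act s v) - act s v =
   act t (act s v - v) + (act t v - v) - (act s v - v).
  by rewrite actB addrA subrK opprB addrA subrK.
apply: VjB; last exact: H.
apply: VjD; last exact: H.
by apply: IH => //; apply: H.
Qed.


Lemma prod_ind n (S : {set 'S_n}) (P : 'S_n -> Prop) :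
  P 1%g -> (forall s g, s \in S -> P g -> P (s * g)%g) ->
  forall g, g \in <<S>>%g -> P g.
Proof.
move=> P1 PM g /gen_prodgP [k [c cS ->]].
elim: k c cS => [|k IH] c cS; first by rewrite big_ord0.
rewrite big_ord_recl; apply: PM => //.
by apply: IH => i; apply: cS.
Qed.

Lemma Vj_actG n q (S : {set 'S_n}) j (v : 'rV['F_q]_n) g :
  g \in <<S>>%g -> Vj S j v -> Vj S j (act g v).
Proof.
move=> gG; move: g gG v; apply: (@prod_ind n S) => [|s g sS IH] v Hv.
  by rewrite act1.
by rewrite actM; apply: IH; apply: Vj_actS.
Qed.

Lemma Vj_subG n q (S : {set 'S_n}) j (v : 'rV['F_q]_n) g :
  g \in <<S>>%g -> Vj S j.+1 v -> Vj S j (act g v - v).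
Proof.
move=> gG; move: g gG v; apply: (@prod_ind n S) => [|s g sS IH] v Hv.
  by rewrite act1 subrr; apply: Vj0.
have -> : act (s * g)%g v - v = (act g (act s v) - act s v) + (act s v - v).
  by rewrite actM addrA subrK.
apply: VjD; last exact: Hv.
by apply: IH; apply: Vj_actS.
Qed.

Definition U n q (S : {set 'S_n}) (v : 'rV['F_q]_n) := exists j, Vj S j v.

Lemma UD n q (S : {set 'S_n}) (u w : 'rV['F_q]_n) : U S u -> U S w -> U S (u + w).
Proof.
move=> [j Hj] [k Hk]; exists (maxn j k); apply: VjD.
  by apply: (Vj_monoL (leq_maxl j k)).
by apply: (Vj_monoL (leq_maxr j k)).
Qed.

Lemma UN n q (S : {set 'S_n}) (u : 'rV['F_q]_n) : U S u -> U S (- u).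
Proof. by move=> [j Hj]; exists j; apply: VjN. Qed.

Lemma UB n q (S : {set 'S_n}) (u w : 'rV['F_q]_n) : U S u -> U S w -> U S (u - w).
Proof. by move=> Hu Hw; apply: UD => //; apply: UN. Qed.

Lemma U_act_inv n q (S : {set 'S_n}) (v : 'rV['F_q]_n) s :
  s \in S -> U S (act s v) -> U S v.
Proof.
move=> sS [j Hj]; exists j.
have -> : v = act (s^-1)%g (act s v) by rewrite -actM mulgV act1.
by apply: Vj_actG => //; rewrite groupV mem_gen.
Qed.

Lemma common_j n q (S : {set 'S_n}) (f : 'S_n -> 'rV['F_q]_n) :
  (forall s, s \in S -> U S (f s)) -> exists j, forall s, s \in S -> Vj S j (f s).
Proof.
move=> H.
suff: forall l : seq 'S_n, (forall s, s \in l -> s \in S) ->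
        exists j, forall s, s \in l -> Vj S j (f s).
  move=> /(_ (enum S)) [].
    by move=> s; rewrite mem_enum.
  by move=> j Hj; exists j => s sS; apply: Hj; rewrite mem_enum.
elim=> [|a l IH] Hl; first by exists 0%N.
have [j Hj] := H a (Hl a (mem_head a l)).
have [k Hk] : exists k, forall s, s \in l -> Vj S k (f s).
  by apply: IH => s sl; apply: Hl; rewrite inE sl orbT.
exists (maxn j k) => s; rewrite inE => /orP [/eqP -> | sl].
  exact: (Vj_monoL (leq_maxl j k)).
by apply: (Vj_monoL (leq_maxr j k)); apply: Hk.
Qed.

Lemma key_a n q (S : {set 'S_n}) (v : 'rV['F_q]_n) :
  ~ U S v -> exists2 s, s \in S & ~ U S (act s v - v).
Proof.
move=> nU; apply: NNPP => Hn; apply: nU.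
have H : forall s, s \in S -> U S (act s v - v).
  move=> s sS; apply: NNPP => Hs; apply: Hn; by exists s.
have [j Hj] := common_j H.
by exists j.+1 => s sS; apply: Hj.
Qed.

Lemma pair_lemma n q (S : {set 'S_n}) (v : 'rV['F_q]_n) :
  ~ U S v -> exists2 s, s \in S & (~ U S (act s v) /\ ~ U S (v - act s v)).
Proof.
move=> nU; have [s sS Hs] := key_a nU; exists s => //; split.
  by move=> H; apply: nU; apply: (U_act_inv sS).
by move=> H; apply: Hs; rewrite -opprB; apply: UN.
Qed.

Lemma exists_nonU n q (S : {set 'S_n}) p :
  prime q -> prime p -> p != q -> (p %| #|<<S>>%g|)%N ->
  exists v : 'rV['F_q]_n, ~ U S v.
Proof.
move=> qP pP pq pG.
have [g gG og] := Cauchy pP pG.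
pose T := fun w : 'rV['F_q]_n => act g w - w.
have C1 : forall j w, Vj S j w -> iter j T w = 0.
  elim=> [|j IH] w H; first by move: H => /= ->.
  by rewrite iterSr; apply: IH; apply: Vj_subG gG H.
have sumT : forall w, \sum_(k < p) act (g ^+ k)%g (T w) = 0.
  move=> w.
  rewrite (eq_bigr (fun k : 'I_p => act (g ^+ k.+1)%g w - act (g ^+ k)%g w)); last first.
    by move=> k _; rewrite /T actB -actM expgS.
  rewrite -(big_mkord xpredT (fun k => act (g ^+ k.+1)%g w - act (g ^+ k)%g w)).
  rewrite (telescope_sumr (fun k => act (g ^+ k)%g w)) //.
  by rewrite -og expg_order expg0 act1 subrr.
have fixK : forall z : 'rV['F_q]_n, act g z = z -> forall k : nat, act (g ^+ k)%g z = z.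
  move=> z Hz k; elim: k => [|k IH]; first by rewrite expg0 act1.
  by rewrite expgS actM Hz IH.
have pn0 : (p%:R : 'F_q) != 0.
  apply/eqP => H; have := val_Fp_nat qP p; rewrite H /= => /esym/eqP.
  rewrite -/(dvdn q p) dvdn_prime2 // => /eqP qp.
  by move: pq; rewrite qp eqxx.
have [i Hi] : exists i, g i != i.
  case: (pickP (fun i => g i != i)) => [i Hi | H]; first by exists i.
  have g1 : g = 1%g.
    by apply/permP => i; rewrite perm1; move: (H i) => /negbFE /eqP.
  move: og; rewrite g1 order1 => p1.
  by move: pP; rewrite -p1.
pose v := \row_(j < n) ((j == i)%:R : 'F_q).
have Tv : T v != 0.
  apply/eqP => /rowP /(_ (g i)); rewrite /T !mxE permK eqxx (negbTE Hi) subr0.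
  by move=> /eqP; rewrite oner_eq0.
have C2 : forall j, iter j.+1 T v != 0.
  elim=> [|j IH]; first by [].
  rewrite iterS; apply/eqP => Hz.
  have Hfix : act g (iter j.+1 T v) = iter j.+1 T v by apply: subr0_eq.
  have := sumT (iter j T v); rewrite -iterS.
  under eq_bigr => k _ do rewrite (fixK _ Hfix k).
  rewrite sumr_const card_ord -scaler_nat => /eqP.
  by rewrite scaler_eq0 (negbTE pn0) (negbTE IH).
exists v => [[j Hj]].
have := C2 j; rewrite iterS (C1 j v Hj) /T act0 subrr.
by rewrite eqxx.
Qed.

Fixpoint traj n q (a : 'rV['F_q]_n) (Y : nat -> 'rV['F_q]_n) (ss : nat -> 'S_n)
  (t : nat) : 'rV['F_q]_n :=
  match t with
  | 0 => a
  | t'.+1 => act (ss t') (traj a Y ss t' + Y t')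
  end.

Definition upd n (ss : nat -> 'S_n) (t : nat) (s : 'S_n) :=
  fun k => if k == t then s else ss k.

Lemma traj_upd n q (a : 'rV['F_q]_n) Y ss t s k :
  (k <= t)%N -> traj a Y (upd ss t s) k = traj a Y ss k.
Proof.
elim: k => [//|k IH] Hk /=.
rewrite IH ?(ltnW Hk) // /upd.
by have -> : (k == t) = false by apply/negbTE; rewrite neq_ltn Hk.
Qed.

Lemma traj_upd_S n q (a : 'rV['F_q]_n) Y ss t s :
  traj a Y (upd ss t s) t.+1 = act s (traj a Y ss t + Y t).
Proof. by rewrite /= traj_upd // /upd eqxx. Qed.

Definition good n q (S : {set 'S_n}) (a : 'rV['F_q]_n) Y ss t :=
  (forall k, ss k \in S) /\ (forall k, (k <= t)%N -> ~ U S (traj a Y ss k)).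

Lemma extend n q (S : {set 'S_n}) (a : 'rV['F_q]_n) Y ss t s :
  good S a Y ss t -> s \in S -> ~ U S (act s (traj a Y ss t + Y t)) ->
  good S a Y (upd ss t s) t.+1.
Proof.
move=> [Hs Hk] sS HU; split.
  by move=> k; rewrite /upd; case: (k == t).
move=> k; rewrite leq_eqVlt => /orP [/eqP -> | lt].
  by rewrite traj_upd_S.
by rewrite traj_upd //; apply: Hk.
Qed.

Lemma main_ind n q (S : {set 'S_n}) (Y : nat -> 'rV['F_q]_n) :
  1%g \in S -> (exists v : 'rV['F_q]_n, ~ U S v) ->
  forall t, exists a b ss ss', [/\ good S a Y ss t, good S b Y ss' t &
     ~ U S (traj a Y ss t - traj b Y ss' t)].
Proof.
move=> S1 [v nv]; elim=> [|t [a [b [ss [ss' [Ga Gb D]]]]]].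
  have [s sS [H1 H2]] := pair_lemma nv.
  exists v, (act s v), (fun _ => 1%g), (fun _ => 1%g); split => //.
    by split => // k; rewrite leqn0 => /eqP ->.
  by split => // k; rewrite leqn0 => /eqP ->.
set A := traj a Y ss t + Y t.
set B := traj b Y ss' t + Y t.
have AB : A - B = traj a Y ss t - traj b Y ss' t.
  by rewrite /A /B opprD addrACA subrr addr0.
case: (classic (U S A)) => UA.
  have nUB : ~ U S B.
    by move=> HB; apply: D; rewrite -AB; apply: UB.
  have [s sS [H1 H2]] := pair_lemma nUB.
  exists b, b, (upd ss' t 1%g), (upd ss' t s); split.
  - by apply: extend => //; rewrite act1.
  - by apply: extend.
  - by rewrite !traj_upd_S act1.
case: (classic (U S B)) => UB.
  have [s sS [H1 H2]] := pair_lemma UA.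
  exists a, a, (upd ss t 1%g), (upd ss t s); split.
  - by apply: extend => //; rewrite act1.
  - by apply: extend.
  - by rewrite !traj_upd_S act1.
exists a, b, (upd ss t 1%g), (upd ss' t 1%g); split.
- by apply: extend => //; rewrite act1.
- by apply: extend => //; rewrite act1.
- by rewrite !traj_upd_S !act1 -/A -/B AB.
Qed.

Definition phi n q (x : config n) : 'rV['F_q]_n := \row_j ((x j)%:R).

Lemma phi_config n q (x : config n) ys ss t :
  phi q (config_at x ys ss t) =
  traj (phi q x) (fun k => phi q (nth (fun _ => 0%N) ys k)) ss t.
Proof.
elim: t => [//|t IH] /=.
rewrite -IH; apply/rowP => j.
by rewrite /step /phi /act !mxE natrD.
Qed.

Lemma phi_lift n q (a : 'rV['F_q]_n) :
  prime q -> phi q (fun j => nat_of_ord (a 0 j)) = a.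
Proof.
move=> qP; apply/rowP => j; rewrite /phi mxE; apply: val_inj => /=.
rewrite val_Fp_nat // modn_small //.
by have := ltn_ord (a 0 j); rewrite [X in (_ < X)%N -> _]Fp_cast.
Qed.

Lemma phi_zero n q m (x : config n) :
  prime q -> (q %| m)%N -> is_zero_mod m x -> phi q x = 0.
Proof.
move=> qP qm H; apply/rowP => j; rewrite /phi !mxE -Fp_nat_mod //.
have : (m %| x j)%N by rewrite /dvdn H.
by move=> /(dvdn_trans qm); rewrite /dvdn => /eqP ->.
Qed.

Lemma not_win n m (S : {set 'S_n}) p q :
  1%g \in S -> prime p -> prime q -> p != q -> (p %| #|<<S>>%g|)%N ->
  (q %| m)%N -> ~ can_win m S.
Proof.
move=> S1 pP qP pq pG qm [ys W].
pose Y := fun k => phi q (nth (fun _ => 0%N) ys k).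
have [a [_ [ss [_ [[Hs Hk] _ _]]]]] :=
  main_ind Y S1 (exists_nonU qP pP pq pG) (size ys).
have [t tle Z] := W (fun j => nat_of_ord (a 0 j)) ss Hs.
apply: (Hk t tle); exists 0%N => /=.
by rewrite -(phi_lift a qP) -phi_config; apply: phi_zero Z.
Qed.

End Alg.

Theorem lemma6p2 (n m : nat) (S : {set 'S_n}) :
  0 < n -> 0 < m -> (1%g \in S) -> can_win m S ->
  #|<<S>>%g| = 1 \/ m = 1 \/
  exists p a b : nat, [/\ prime p, 0 < a, 0 < b, #|<<S>>%g| = p ^ a & m = p ^ b].
Proof.
move=> n0 m0 S1 W.
set g := #|<<S>>%g|.
have K : forall p q, prime p -> prime q -> p %| g -> q %| m -> p = q.
  move=> p q pP qP pg qm; case: (eqVneq p q) => // pq.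
  by case: (not_win S1 pP qP pq pg qm W).
have g0 : 0 < g by apply: cardG_gt0.
case: (eqVneq g 1) => [->|g1]; first by left.
case: (eqVneq m 1) => [->|m1]; first by right; left.
right; right.
have g2 : 1 < g by rewrite ltn_neqAle eq_sym g1 g0.
have m2 : 1 < m by rewrite ltn_neqAle eq_sym m1 m0.
set p := pdiv g.
have pP : prime p by apply: pdiv_prime.
have pg : p %| g by apply: pdiv_dvd.
have pm : p = pdiv m by apply: K => //; [apply: pdiv_prime | apply: pdiv_dvd].
have gn : p.-nat g.
  apply/pnatP => // r rP rg; rewrite inE /=.
  rewrite (K r (pdiv m)) //; [by rewrite -pm | by apply: pdiv_prime | by apply: pdiv_dvd].
have mn : p.-nat m.
  apply/pnatP => // r rP rm; rewrite inE /=.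
  by rewrite (K p r).
exists p, (logn p g), (logn p m); split => //.
- rewrite lt0n; apply/eqP => l0; move: g1; rewrite -(part_pnat_id gn) p_part l0.
  by rewrite eqxx.
- rewrite lt0n; apply/eqP => l0; move: m1; rewrite -(part_pnat_id mn) p_part l0.
  by rewrite eqxx.
- by rewrite -p_part part_pnat_id.
- by rewrite -p_part part_pnat_id.
Qed.
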